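(* Let $\mathcal F=(F,\rightarrowtail)$ be an argumentation framework and $A\subseteq F$. Then $A$ is strongly tenable if and only if $A$ is $1$-strongly tenable, i.e., Pro has a winning strategy starting with $X_0=A$ in the strong tenability game in which each move after $X_0$ introduces at most one new argument.
   Context: An argumentation framework (AF) $\mathcal F=(F,\rightarrowtail)$ consists of a (possibly infinite) set $F$ of arguments and a binary attack relation $\rightarrowtail\subseteq F\times F$. An argument $a$ attacks a set $B$ if $a\rightarrowtail b$ for some $b\in B$. $A^+=\{x\in F:\exists a\in A,\ a\rightarrowtail x\}$. A set is conflict-free if none of its elements attacks one of its elements. For $A,B\subseteq F$, $A$ is as cogent as $B$, written $A\succeq B$, if $A$ is conflict-free and every $b\in B$ that attacks $A$ belongs to $A^+$. Strong tenability game: a strong tenability dispute on $\mathcal F$ is a finite sequence $(X_0,\dots,X_n)$ of subsets of $F$, where even-indexed sets are moves of the Proponent (Pro) and odd-indexed sets are moves of the Opponent (Opp), such that (1) each $X_i$ is conflict-free; (2) $X_i\subseteq X_{i+2}$ whenever both are defined; (3) $X_1$ and each $X_{i+2}\setminus X_i$ are finite; (4) every Pro move $X_{2k}$ with $k\ge 1$ satisfies $X_{2k}\succeq X_{2k-1}$; (5) every Opp move $X_{2k+1}$ satisfies $X_{2k}\not\succeq X_{2k+1}$ (some element of $X_{2k+1}$ attacks $X_{2k}$ and is not in $X_{2k}^+$). Play starts with $X_0=A$ and players alternately extend the sequence so that it remains a dispute. A dispute is concluded if it has no legal extension; a concluded dispute is won by the player who made its last move. A strategy for Pro assigns to each dispute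 ending with an Opp move a legal Pro reply; it is winning if every concluded dispute starting with $X_0=A$ in which Pro follows it is won by Pro (infinite plays count as wins for Pro). $A$ is strongly tenable if Pro has a winning strategy starting with $X_0=A$. For $n\ge1$, the $n$-strong tenability game is the strong tenability game with the additional constraint that $|X_1|\le n$ and $|X_{i+2}\setminus X_i|\le n$ for every $i$ (each move except Pro's first introduces at most $n$ new arguments); $A$ is $n$-strongly tenable if Pro has a winning strategy starting with $X_0=A$ in this game. *)

(* Defs.v *)
From Stdlib Require Import List Arith.
Import ListNotations.

Section AF.
Context {T : Type} (att : T -> T -> Prop).

Definition conflict_free (S : T -> Prop) : Prop :=
  forall a b, S a -> S b -> ~ att a b.

Definition plus (S : T -> Prop) (x : T) : Prop := exists a, S a /\ att a x.

Definition attacks_set (a : T) (S : T -> Prop) : Prop := exists b, S b /\ att a b.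

Definition cogent (A B : T -> Prop) : Prop :=
  conflict_free A /\ forall b, B b -> attacks_set b A -> plus A b.

End AF.

Definition finite_set {T : Type} (S : T -> Prop) : Prop :=
  exists l : list T, forall x, S x -> In x l.

Definition card_le {T : Type} (S : T -> Prop) (n : nat) : Prop :=
  exists l : list T, length l <= n /\ forall x, S x -> In x l.

Definition set_diff {T : Type} (S U : T -> Prop) : T -> Prop := fun x => S x /\ ~ U x.

Definition subset {T : Type} (S U : T -> Prop) : Prop := forall x, S x -> U x.

(* Size constraint on new arguments: None = strong tenability game (finite),
   Some n = n-strong tenability game (finite and at most n). *)
Definition size_ok {T : Type} (bd : option nat) (S : T -> Prop) : Prop :=
  finite_set S /\ match bd with None => True | Some n => card_le S n end.

Section Game.
Context {T : Type} (att : T -> T -> Prop) (bd : option nat).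

Definition X (d : list (T -> Prop)) (i : nat) : T -> Prop := nth i d (fun _ => False).

Definition is_dispute (d : list (T -> Prop)) : Prop :=
  d <> [] /\
  (forall i, i < length d -> conflict_free att (X d i)) /\
  (forall i, i + 2 < length d -> subset (X d i) (X d (i + 2))) /\
  (1 < length d -> size_ok bd (X d 1)) /\
  (forall i, i + 2 < length d -> size_ok bd (set_diff (X d (i + 2)) (X d i))) /\
  (forall k, 1 <= k -> 2 * k < length d -> cogent att (X d (2 * k)) (X d (2 * k - 1))) /\
  (forall k, 2 * k + 1 < length d -> ~ cogent att (X d (2 * k)) (X d (2 * k + 1))).

Definition starts_with (A : T -> Prop) (d : list (T -> Prop)) : Prop := X d 0 = A.

Definition concluded (d : list (T -> Prop)) : Prop :=
  is_dispute d /\ forall Y, ~ is_dispute (d ++ [Y]).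

(* the last move X_{length d - 1} has even index, i.e. was made by Pro *)
Definition won_by_pro (d : list (T -> Prop)) : Prop := Nat.odd (length d) = true.

(* strategy for Pro: maps disputes (ending with an Opp move) to Pro's reply *)
Definition strategy := list (T -> Prop) -> (T -> Prop).

Definition follows (s : strategy) (d : list (T -> Prop)) : Prop :=
  forall k, 1 <= k -> 2 * k < length d -> X d (2 * k) = s (firstn (2 * k) d).

Definition winning (A : T -> Prop) (s : strategy) : Prop :=
  (forall d, is_dispute d -> starts_with A d -> follows s d ->
     Nat.even (length d) = true -> is_dispute (d ++ [s d])) /\
  (forall d, concluded d -> starts_with A d -> follows s d -> won_by_pro d).

Definition pro_wins_game (A : T -> Prop) : Prop := exists s, winning A s.

End Game.

Definition strongly_tenable {T : Type} (att : T -> T -> Prop) (A : T -> Prop) : Prop :=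
  pro_wins_game att None A.

Definition n_strongly_tenable {T : Type} (att : T -> T -> Prop) (n : nat) (A : T -> Prop) : Prop :=
  pro_wins_game att (Some n) A.

(* Main.v *)
Require Import Defs.
From Stdlib Require Import List Arith Lia Classical ClassicalEpsilon.
Import ListNotations.

Section S.
Context {T : Type} (att : T -> T -> Prop).
Local Notation D := (list (T -> Prop)).

Lemma X_app (d e : D) i : i < length d -> X (d ++ e) i = X d i.
Proof. intros H. unfold X. apply app_nth1; auto. Qed.
Lemma X_snoc (d : D) Y i : i = length d -> X (d ++ [Y]) i = Y.
Proof. intros ->. unfold X. rewrite app_nth2 by lia. rewrite Nat.sub_diag. reflexivity. Qed.

Lemma XYZ (d : D) Y Z m : length d = 2*m+1 ->
  X ((d++[Y])++[Z]) (2*(m+1)) = Z /\ X ((d++[Y])++[Z]) (2*(m+1)-1) = Y /\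
  X ((d++[Y])++[Z]) 0 = X d 0 /\ length ((d++[Y])++[Z]) = 2*(m+1)+1.
Proof. intros Hl. split; [|split; [|split]].
 - apply X_snoc. rewrite length_app; simpl; lia.
 - rewrite X_app by (rewrite ?length_app; simpl; lia). apply X_snoc; lia.
 - rewrite !X_app; auto; rewrite ?length_app; simpl; lia.
 - rewrite !length_app; simpl; lia.
Qed.

Lemma disp_prefix bd (d : D) Y : d <> [] -> is_dispute att bd (d ++ [Y]) -> is_dispute att bd d.
Proof. intros Hne (H0&H1&H2&H3&H4&H5&H6). rewrite length_app in *; simpl in *.
 split; [exact Hne|]. split; [|split; [|split; [|split; [|split]]]].
 - intros i Hi. rewrite <- (X_app d [Y]) by lia. apply H1; lia.
 - intros i Hi. rewrite <- (X_app d [Y] i) by lia. rewrite <- (X_app d [Y] (i+2)) by lia. apply H2; lia.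
 - intros Hl. rewrite <- (X_app d [Y]) by lia. apply H3; lia.
 - intros i Hi. rewrite <- (X_app d [Y] i) by lia. rewrite <- (X_app d [Y] (i+2)) by lia. apply H4; lia.
 - intros k Hk Hl. rewrite <- (X_app d [Y] (2*k)) by lia. rewrite <- (X_app d [Y] (2*k-1)) by lia. apply H5; lia.
 - intros k Hl. rewrite <- (X_app d [Y] (2*k)) by lia. rewrite <- (X_app d [Y] (2*k+1)) by lia. apply H6; lia.
Qed.

Lemma firstn_app_le (l1 l2 : D) n : n <= length l1 -> firstn n (l1 ++ l2) = firstn n l1.
Proof. intros H. rewrite firstn_app. replace (n - length l1) with 0 by lia. simpl. apply app_nil_r. Qed.

Lemma follows_prefix (s : @strategy T) d Y : follows s (d ++ [Y]) -> follows s d.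
Proof. intros H k Hk Hl. rewrite <- (X_app d [Y]) by lia. rewrite H by (rewrite ?length_app; simpl; lia).
 rewrite firstn_app_le by lia. reflexivity. Qed.

Lemma follows_odd (s : @strategy T) d Y j : follows s d -> length d = 2*j+1 -> follows s (d ++ [Y]).
Proof. intros H Hl k Hk Hk2. rewrite length_app in Hk2; simpl in Hk2. rewrite X_app by lia.
 rewrite firstn_app_le by lia. apply H; lia. Qed.

Lemma follows_even (s : @strategy T) d j : follows s d -> length d = 2*j+2 -> follows s (d ++ [s d]).
Proof. intros H Hl k Hk Hk2. rewrite length_app in Hk2; simpl in Hk2.
 destruct (Nat.eq_dec (2*k) (length d)) as [E|E].
 - rewrite X_snoc by lia. rewrite E, firstn_app_le by lia. rewrite firstn_all. reflexivity.
 - rewrite X_app by lia. rewrite firstn_app_le by lia. apply H; lia.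
Qed.

Lemma decomp (d : D) : d <> [] -> exists d0 Y, d = d0 ++ [Y] /\ length d0 = length d - 1.
Proof. intros H. exists (removelast d), (last d (fun _ => False)).
 pose proof (app_removelast_last (fun _ => False) H) as E. split; [exact E|].
 assert (length d = length (removelast d ++ [last d (fun _ => False)])) as E2 by (f_equal; exact E).
 rewrite length_app in E2; simpl in E2. lia. Qed.

Lemma inv_wins bd A (Good : D -> Prop) :
  (conflict_free att A -> Good [A]) ->
  (forall d Y, Good d -> is_dispute att bd (d ++ [Y]) ->
     exists Z, is_dispute att bd ((d ++ [Y]) ++ [Z]) /\ Good ((d ++ [Y]) ++ [Z])) ->
  pro_wins_game att bd A.
Proof.
 intros H0 Hs.
 set (s := fun d : D => epsilon (inhabits (fun _ : T => False))
            (fun Z => is_dispute att bd (d ++ [Z]) /\ Good (d ++ [Z]))).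
 assert (Hg : forall n d, length d = 2*n+1 -> is_dispute att bd d -> starts_with A d -> follows s d -> Good d).
 { induction n as [|n IH]; intros d Hl Hd Hst Hf.
   - destruct d as [|D0 [|]]; simpl in Hl; try lia. unfold starts_with, X in Hst; simpl in Hst. subst D0.
     apply H0. destruct Hd as (_&H1&_). exact (H1 0 ltac:(simpl; lia)).
   - assert (d <> []) as Hne by (intro; subst; discriminate).
     destruct (decomp d Hne) as (d1 & Z & E1 & L1).
     assert (d1 <> []) as Hne1 by (intro; subst; simpl in *; lia).
     destruct (decomp d1 Hne1) as (d0 & Y & E0 & L0).
     subst d d1.
     assert (Hd1 := disp_prefix _ _ _ Hne1 Hd).
     assert (Hd0 : is_dispute att bd d0). { apply disp_prefix with Y; auto. intro; subst; simpl in *; lia. }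
     assert (Good d0) as G0.
     { apply (IH d0); auto. rewrite !length_app in Hl; simpl in Hl; lia.
       unfold starts_with in *. rewrite <- Hst. rewrite <- app_assoc. symmetry. apply X_app.
       rewrite !length_app in Hl; simpl in Hl; lia.
       apply follows_prefix with Y. apply follows_prefix with Z. exact Hf. }
     assert (Z = s (d0 ++ [Y])) as EZ.
     { rewrite !length_app in Hl; simpl in Hl.
       pose proof (Hf (n+1) ltac:(lia) ltac:(rewrite ?length_app; simpl; lia)) as HH.
       rewrite X_snoc in HH by (rewrite ?length_app; simpl; lia).
       rewrite HH. f_equal. replace (2*(n+1)) with (length (d0++[Y])) by (rewrite ?length_app; simpl; lia).
       rewrite firstn_app_le by lia. apply firstn_all. }
     destruct (Hs d0 Y G0 Hd1) as [Z' HZ'].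
     pose proof (epsilon_spec (inhabits (fun _ : T => False))
            (fun Z => is_dispute att bd ((d0++[Y]) ++ [Z]) /\ Good ((d0++[Y]) ++ [Z])) (ex_intro _ Z' HZ')) as HE.
     subst Z. apply HE. }
 assert (Hw1 : forall d, is_dispute att bd d -> starts_with A d -> follows s d ->
     Nat.even (length d) = true -> is_dispute att bd (d ++ [s d])).
 { intros d Hd Hst Hf Hev. apply Nat.even_spec in Hev. destruct Hev as [m Hm].
   assert (d <> []) as Hne by (destruct Hd; auto).
   destruct (decomp d Hne) as (d0 & Y & E0 & L0). subst d.
   rewrite length_app in Hm; simpl in Hm.
   assert (Good d0) as G0.
   { apply (Hg (m-1) d0); [lia| |  |].
     apply disp_prefix with Y; auto; intro; subst; simpl in *; lia.
     unfold starts_with in *. rewrite <- Hst. symmetry. apply X_app. lia.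
     apply follows_prefix with Y; auto. }
   destruct (Hs d0 Y G0 Hd) as [Z' HZ'].
   pose proof (epsilon_spec (inhabits (fun _ : T => False))
            (fun Z => is_dispute att bd ((d0++[Y]) ++ [Z]) /\ Good ((d0++[Y]) ++ [Z])) (ex_intro _ Z' HZ')) as HE.
   apply HE. }
 exists s. split; [exact Hw1|].
 intros d [Hd Hc] Hst Hf. unfold won_by_pro.
 destruct (Nat.odd (length d)) eqn:E; auto. exfalso. apply (Hc (s d)). apply Hw1; auto.
 rewrite <- Nat.negb_odd, E. reflexivity.
Qed.


Lemma ext1 bd (d : D) Y m : length d = 2*m+1 -> is_dispute att bd (d ++ [Y]) ->
  conflict_free att Y /\ conflict_free att (X d (2*m)) /\ ~ cogent att (X d (2*m)) Y /\
  (m = 0 -> size_ok bd Y) /\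
  (0 < m -> subset (X d (2*m-1)) Y /\ size_ok bd (set_diff Y (X d (2*m-1)))).
Proof. intros Hl (H0&H1&H2&H3&H4&H5&H6). rewrite length_app in *; change (length [Y]) with 1 in *.
 assert (EY: X (d ++ [Y]) (2*m+1) = Y) by (apply X_snoc; lia).
 assert (EP: forall i, i < length d -> X (d++[Y]) i = X d i) by (intros; apply X_app; lia).
 split; [|split; [|split; [|split]]].
 - rewrite <- EY. apply H1; lia.
 - rewrite <- EP by lia. apply H1; lia.
 - pose proof (H6 m ltac:(lia)) as HH. rewrite EY, EP in HH by lia. exact HH.
 - intros ->. pose proof (H3 ltac:(lia)) as HH. rewrite X_snoc in HH by lia. exact HH.
 - intros Hm. pose proof (H2 (2*m-1) ltac:(lia)) as HH. pose proof (H4 (2*m-1) ltac:(lia)) as HH'.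
   replace (2*m-1+2) with (2*m+1) in HH, HH' by lia. rewrite EY, EP in HH, HH' by lia. auto.
Qed.

Lemma build1 bd (d : D) Y m : length d = 2*m+1 -> is_dispute att bd d -> conflict_free att Y ->
  ~ cogent att (X d (2*m)) Y -> (m = 0 -> size_ok bd Y) ->
  (0 < m -> subset (X d (2*m-1)) Y /\ size_ok bd (set_diff Y (X d (2*m-1)))) ->
  is_dispute att bd (d ++ [Y]).
Proof. intros Hl (H0&H1&H2&H3&H4&H5&H6) HY Hc Hs0 Hs1.
 split; [|split; [|split; [|split; [|split; [|split]]]]]; rewrite ?length_app; cbn [length].
 - intro E. apply app_eq_nil in E. destruct E; discriminate.
 - intros i Hi. destruct (Nat.eq_dec i (length d)).
   + rewrite X_snoc by lia. auto.
   + rewrite X_app by lia. apply H1; lia.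
 - intros i Hi. destruct (Nat.eq_dec (i+2) (length d)).
   + rewrite (X_snoc d Y (i+2)) by lia. rewrite (X_app d [Y] i) by lia.
     replace i with (2*m-1) by lia. apply Hs1; lia.
   + rewrite (X_app d [Y] (i+2)) by lia. rewrite (X_app d [Y] i) by lia. apply H2; lia.
 - intros Hl1. destruct (Nat.eq_dec m 0).
   + subst m. rewrite X_snoc by lia. auto.
   + rewrite X_app by lia. apply H3; lia.
 - intros i Hi. destruct (Nat.eq_dec (i+2) (length d)).
   + rewrite (X_snoc d Y (i+2)) by lia. rewrite (X_app d [Y] i) by lia.
     replace i with (2*m-1) by lia. apply Hs1; lia.
   + rewrite (X_app d [Y] (i+2)) by lia. rewrite (X_app d [Y] i) by lia. apply H4; lia.
 - intros k Hk Hk2. rewrite (X_app d [Y] (2*k)) by lia. rewrite (X_app d [Y] (2*k-1)) by lia. apply H5; lia.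
 - intros k Hk. destruct (Nat.eq_dec k m).
   + subst k. rewrite (X_snoc d Y (2*m+1)) by lia. rewrite (X_app d [Y] (2*m)) by lia. auto.
   + rewrite (X_app d [Y] (2*k+1)) by lia. rewrite (X_app d [Y] (2*k)) by lia. apply H6; lia.
Qed.

Lemma ext2 bd (d : D) Y Z m : length d = 2*m+1 -> is_dispute att bd ((d ++ [Y]) ++ [Z]) ->
  conflict_free att Z /\ subset (X d (2*m)) Z /\ size_ok bd (set_diff Z (X d (2*m))) /\ cogent att Z Y.
Proof. intros Hl (H0&H1&H2&H3&H4&H5&H6). rewrite !length_app in *; change (length [Y]) with 1 in *; change (length [Z]) with 1 in *.
 destruct (XYZ d Y Z m Hl) as (EZ & EY & _ & _).
 assert (EP: X ((d++[Y])++[Z]) (2*m) = X d (2*m)). { rewrite (X_app (d++[Y]) [Z]) by (rewrite length_app; cbn [length]; lia). apply X_app; lia. }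
 replace (2*(m+1)) with (2*m+2) in EZ by lia. replace (2*(m+1)-1) with (2*m+1) in EY by lia.
 split; [|split; [|split]].
 - rewrite <- EZ. apply H1; lia.
 - pose proof (H2 (2*m) ltac:(lia)) as HH. rewrite EP, EZ in HH. exact HH.
 - pose proof (H4 (2*m) ltac:(lia)) as HH. rewrite EP, EZ in HH. exact HH.
 - pose proof (H5 (m+1) ltac:(lia) ltac:(lia)) as HH.
   replace (2*(m+1)) with (2*m+2) in HH by lia. replace (2*m+2-1) with (2*m+1) in HH by lia.
   rewrite EZ, EY in HH. exact HH.
Qed.

Lemma build2 bd (d : D) Y Z m : length d = 2*m+1 -> is_dispute att bd (d ++ [Y]) ->
  conflict_free att Z -> subset (X d (2*m)) Z -> size_ok bd (set_diff Z (X d (2*m))) ->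
  cogent att Z Y -> is_dispute att bd ((d ++ [Y]) ++ [Z]).
Proof. intros Hl (H0&H1&H2&H3&H4&H5&H6) HcZ HsZ HoZ HcgZ.
 set (d' := d ++ [Y]) in *.
 assert (Ld : length d' = 2*m+2) by (subst d'; rewrite length_app; simpl; lia).
 assert (EY : X d' (2*m+1) = Y) by (apply X_snoc; lia).
 assert (EP : X d' (2*m) = X d (2*m)) by (apply X_app; lia).
 split; [|split; [|split; [|split; [|split; [|split]]]]]; rewrite ?length_app; cbn [length].
 - intro E. apply app_eq_nil in E. destruct E; discriminate.
 - intros i Hi. destruct (Nat.eq_dec i (length d')).
   + rewrite X_snoc by lia. auto.
   + rewrite X_app by lia. apply H1; lia.
 - intros i Hi. destruct (Nat.eq_dec (i+2) (length d')).
   + rewrite (X_snoc d' Z (i+2)) by lia. rewrite (X_app d' [Z] i) by lia.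
     replace i with (2*m) by lia. rewrite EP. auto.
   + rewrite (X_app d' [Z] (i+2)) by lia. rewrite (X_app d' [Z] i) by lia. apply H2; lia.
 - intros Hl1. rewrite X_app by lia. apply H3; lia.
 - intros i Hi. destruct (Nat.eq_dec (i+2) (length d')).
   + rewrite (X_snoc d' Z (i+2)) by lia. rewrite (X_app d' [Z] i) by lia.
     replace i with (2*m) by lia. rewrite EP. auto.
   + rewrite (X_app d' [Z] (i+2)) by lia. rewrite (X_app d' [Z] i) by lia. apply H4; lia.
 - intros k Hk Hk2. destruct (Nat.eq_dec (2*k) (length d')).
   + rewrite (X_snoc d' Z (2*k)) by lia. rewrite (X_app d' [Z] (2*k-1)) by lia.
     replace (2*k-1) with (2*m+1) by lia. rewrite EY. auto.
   + rewrite (X_app d' [Z] (2*k)) by lia. rewrite (X_app d' [Z] (2*k-1)) by lia. apply H5; lia.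
 - intros k Hk. rewrite (X_app d' [Z] (2*k+1)) by lia. rewrite (X_app d' [Z] (2*k)) by lia. apply H6; lia.
Qed.

Lemma disp_single bd (A : T -> Prop) : conflict_free att A -> is_dispute att bd [A].
Proof. intros H. split; [discriminate|]. split; [|split; [|split; [|split; [|split]]]];
  simpl; try (intros; lia). intros i Hi. destruct i; [exact H| lia]. Qed.

Lemma so1 (S : T -> Prop) x : (forall y, S y -> y = x) -> size_ok (Some 1) S.
Proof. intros H. split; exists [x]; [|split; [simpl; lia|]]; intros y Hy; left; symmetry; auto. Qed.
Lemma soN (S : T -> Prop) x : (forall y, S y -> y = x) -> size_ok None S.
Proof. intros H. split; [|exact I]. exists [x]; intros y Hy; left; symmetry; auto. Qed.
Lemma so1_inv (S : T -> Prop) b : size_ok (Some 1) S -> S b -> forall y, S y -> y = b.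
Proof. intros [_ [l [Hl Hc]]] Hb y Hy. destruct l as [|a [|a' l]]; simpl in Hl; try lia; [destruct (Hc b Hb)|].
 pose proof (Hc b Hb) as E1; pose proof (Hc y Hy) as E2. simpl in *.
 destruct E1 as [E1|[]], E2 as [E2|[]]; congruence. Qed.
Lemma cf_sub (S U : T -> Prop) : subset S U -> conflict_free att U -> conflict_free att S.
Proof. intros H C a b Ha Hb. apply C; auto. Qed.
Lemma plus_mono (S U : T -> Prop) x : subset S U -> plus att S x -> plus att U x.
Proof. intros H [a [Ha Hx]]. exists a; auto. Qed.
Lemma disp_cf bd (d : D) i : is_dispute att bd d -> i < length d -> conflict_free att (X d i).
Proof. intros (_&H&_) Hi. auto. Qed.

Lemma dir1 (A : T -> Prop) : strongly_tenable att A -> n_strongly_tenable att 1 A.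
Proof.
 intros [S [HS _]]. unfold n_strongly_tenable.
 apply inv_wins with (Good := fun d => exists m, length d = 2*m+1 /\
   (0 < m -> subset (X d (2*m-1)) (plus att (X d (2*m)))) /\
   exists h j, is_dispute att None h /\ starts_with A h /\ follows S h /\ length h = 2*j+1 /\
     subset (X d (2*m)) (X h (2*j)) /\ (0 < j -> 0 < m /\ subset (X h (2*j-1)) (X d (2*m-1)))).
 - intros Hcf. exists 0. split; [reflexivity|]. split; [lia|]. exists [A], 0.
   split; [apply disp_single; auto|]. split; [reflexivity|]. split; [intros k Hk Hl; simpl in Hl; lia|].
   split; [reflexivity|]. split; [intros x Hx; exact Hx| lia].
 - intros d Y (m & Hl & Hans & h & j & Hh & Hst & Hf & Hlh & Hsub & Hj) HdY.
   destruct (ext1 _ d Y m Hl HdY) as (HcfY & HcfP & Hnc & Hm0 & Hm1).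
   assert (Hb: exists b, Y b /\ attacks_set att b (X d (2*m)) /\ ~ plus att (X d (2*m)) b).
   { apply NNPP; intro Hn. apply Hnc. split; auto. intros b Yb Ab. apply NNPP; intro Hp. apply Hn; eauto. }
   destruct Hb as (b & Yb & Ab & Npb).
   assert (HYb: forall y, Y y -> (0 < m /\ X d (2*m-1) y) \/ y = b).
   { intros y Yy. destruct (Nat.eq_dec m 0) as [E|E].
     - right. apply (so1_inv Y b); auto.
     - destruct (classic (X d (2*m-1) y)) as [Ho|Ho]. left; split; [lia|auto].
       right. destruct (Hm1 ltac:(lia)) as [Hs Hso]. apply (so1_inv _ b Hso); [|split; auto].
       split; auto. intro Ob. apply Npb. apply Hans; [lia|auto]. }
   assert (Key: forall Q c, subset (X d (2*m)) Q -> conflict_free att Q -> Q c -> att c b ->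
     is_dispute att (Some 1) ((d++[Y])++[fun x => X d (2*m) x \/ x = c]) /\
     subset Y (plus att (fun x => X d (2*m) x \/ x = c)) /\
     subset (fun x => X d (2*m) x \/ x = c) Q).
   { intros Q c HPQ HcQ Qc Acb.
     assert (HZQ : subset (fun x => X d (2*m) x \/ x = c) Q) by (intros x [Hx| ->]; auto).
     assert (HYZ : subset Y (plus att (fun x => X d (2*m) x \/ x = c))).
     { intros y Yy. destruct (HYb y Yy) as [[Hm Oy]| ->].
       - apply plus_mono with (X d (2*m)); [intros x Hx; left; exact Hx|]. apply Hans; auto.
       - exists c. split; [right; reflexivity|exact Acb]. }
     split; [|split; auto].
     apply build2 with m; auto.
     + apply cf_sub with Q; auto.
     + intros x Hx; left; exact Hx.
     + apply so1 with c. intros y [[Hy| ->] Hn]; [contradiction|reflexivity].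
     + split; [apply cf_sub with Q; auto|]. intros y Yy _. apply HYZ; auto. }
   assert (Hcfh : conflict_free att (X h (2*j))) by (apply disp_cf with None; auto; lia).
   destruct (classic (plus att (X h (2*j)) b)) as [[c [Hc Hcb]] | Hnb].
   + destruct (Key (X h (2*j)) c Hsub Hcfh Hc Hcb) as (HD & HYZ & HZQ).
     eexists. split; [exact HD|].
     destruct (XYZ d Y (fun x => X d (2*m) x \/ x = c) m Hl) as (EZ & EY & _ & EL).
     exists (m+1). rewrite EZ, EY. split; [exact EL|]. split; [intros _; exact HYZ|].
     exists h, j. split; [exact Hh|]. split; [exact Hst|]. split; [exact Hf|]. split; [exact Hlh|]. split; [exact HZQ|].
     intros Hj0. split; [lia|]. destruct (Hj Hj0) as [Hm Hs]. intros x Hx. apply Hm1; auto.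
   + set (Yh := fun y => (0 < j /\ X h (2*j-1) y) \/ y = b).
     assert (HYhY : subset Yh Y).
     { intros y [[Hj0 Hy]| ->]; auto. destruct (Hj Hj0) as [Hm Hs]. apply Hm1; auto. }
     assert (Abh : attacks_set att b (X h (2*j))).
     { destruct Ab as [p [Hp Hbp]]. exists p; auto. }
     assert (HhY : is_dispute att None (h ++ [Yh])).
     { apply build1 with j; auto.
       - apply cf_sub with Y; auto.
       - intros [_ Hc]. apply Hnb. apply Hc; [right; reflexivity|exact Abh].
       - intros ->. apply soN with b. intros y [[Hj0 _]| ->]; [lia|reflexivity].
       - intros Hj0. split; [intros y Hy; left; auto|].
         apply soN with b. intros y [[[_ Hy]| ->] Hn]; [contradiction|reflexivity]. }
     assert (HZ : is_dispute att None ((h ++ [Yh]) ++ [S (h ++ [Yh])])).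
     { apply HS; auto.
       - unfold starts_with in *. rewrite X_app; auto. lia.
       - apply follows_odd with j; auto.
       - apply Nat.even_spec. exists (j+1). rewrite length_app; cbn [length]; lia. }
     destruct (ext2 _ h Yh _ j Hlh HZ) as (HcfZh & HsubZh & _ & HcogZh).
     assert (Hpb : plus att (S (h ++ [Yh])) b).
     { apply HcogZh; [right; reflexivity|]. destruct Abh as [p [Hp Hbp]]. exists p; auto. }
     destruct Hpb as [c [Hc Hcb]].
     destruct (Key (S (h ++ [Yh])) c ltac:(intros x Hx; auto) HcfZh Hc Hcb) as (HD & HYZ & HZQ).
     eexists. split; [exact HD|].
     destruct (XYZ d Y (fun x => X d (2*m) x \/ x = c) m Hl) as (EZ & EY & _ & EL).
     destruct (XYZ h Yh (S (h ++ [Yh])) j Hlh) as (EZh & EYh & E0h & ELh).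
     exists (m+1). rewrite EZ, EY. split; [exact EL|]. split; [intros _; exact HYZ|].
     exists ((h ++ [Yh]) ++ [S (h ++ [Yh])]), (j+1). rewrite EZh, EYh.
     split; [exact HZ|]. split; [unfold starts_with in *; rewrite E0h; exact Hst|].
     split; [apply follows_even with j; [apply follows_odd with j; auto| rewrite length_app; cbn [length]; lia]|].
     split; [exact ELh|]. split; [exact HZQ|]. intros _. split; [lia|exact HYhY].
Qed.

Lemma feed (s1 : @strategy T) A Y
  (Hw : forall d, is_dispute att (Some 1) d -> starts_with A d -> follows s1 d ->
     Nat.even (length d) = true -> is_dispute att (Some 1) (d ++ [s1 d]))
  (HcfY : conflict_free att Y) :
  forall n (R : list T), length R < n -> forall h j, is_dispute att (Some 1) h -> starts_with A h ->
  follows s1 h -> length h = 2*j+1 -> (0 < j -> subset (X h (2*j-1)) Y) ->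
  (forall x, Y x -> ~ plus att (X h (2*j)) x -> In x R) ->
  exists h' j', is_dispute att (Some 1) h' /\ starts_with A h' /\ follows s1 h' /\
    length h' = 2*j'+1 /\ (0 < j' -> subset (X h' (2*j'-1)) Y) /\
    subset (X h (2*j)) (X h' (2*j')) /\ finite_set (set_diff (X h' (2*j')) (X h (2*j))) /\
    cogent att (X h' (2*j')) Y.
Proof.
 induction n as [|n IH]; intros R HR h j Hh Hst Hf Hl HO Hcov; [lia|].
 assert (HcfP : conflict_free att (X h (2*j))) by (apply disp_cf with (Some 1); auto; lia).
 destruct (classic (exists x, Y x /\ attacks_set att x (X h (2*j)) /\ ~ plus att (X h (2*j)) x))
   as [[x (Yx & Ax & Nx)]|Hno].
 2:{ exists h, j. split; [exact Hh|]. split; [exact Hst|]. split; [exact Hf|]. split; [exact Hl|].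
     split; [exact HO|]. split; [intros z Hz; exact Hz|]. split; [exists []; intros z [Hz1 Hz2]; contradiction|].
     split; [exact HcfP|]. intros y Yy Ay. apply NNPP; intro; apply Hno; eauto. }
 pose proof (Hcov x Yx Nx) as Hin. apply in_split in Hin. destruct Hin as (R1 & R2 & ER).
 set (Yh := fun y => (0 < j /\ X h (2*j-1) y) \/ y = x).
 assert (HYhY : subset Yh Y) by (intros y [[Hj0 Hy]| ->]; [apply HO; auto|auto]).
 assert (HhY : is_dispute att (Some 1) (h ++ [Yh])).
 { apply build1 with j; auto.
   - apply cf_sub with Y; auto.
   - intros [_ Hc]. apply Nx. apply Hc; [right; reflexivity|exact Ax].
   - intros ->. apply so1 with x. intros y [[Hj0 _]| ->]; [lia|reflexivity].
   - intros Hj0. split; [intros y Hy; left; auto|].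
     apply so1 with x. intros y [[[_ Hy]| ->] Hn]; [contradiction|reflexivity]. }
 assert (HZ : is_dispute att (Some 1) ((h ++ [Yh]) ++ [s1 (h ++ [Yh])])).
 { apply Hw; auto.
   - unfold starts_with in *. rewrite X_app; auto. lia.
   - apply follows_odd with j; auto.
   - apply Nat.even_spec. exists (j+1). rewrite length_app; cbn [length]; lia. }
 destruct (ext2 _ h Yh _ j Hl HZ) as (HcfZh & HsubZh & HsoZh & HcogZh).
 assert (Hpx : plus att (s1 (h ++ [Yh])) x).
 { apply HcogZh; [right; reflexivity|]. destruct Ax as [p [Hp Hbp]]. exists p; auto. }
 destruct (XYZ h Yh (s1 (h ++ [Yh])) j Hl) as (EZh & EYh & E0h & ELh).
 destruct (IH (R1 ++ R2) ltac:(rewrite ER, !length_app in HR; cbn [length] in HR; rewrite length_app; lia)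
     ((h ++ [Yh]) ++ [s1 (h ++ [Yh])]) (j+1) HZ) as (h' & j' & H1 & H2 & H3 & H4 & H5 & H6 & H7 & H8).
 - unfold starts_with in *. rewrite E0h; exact Hst.
 - apply follows_even with j; [apply follows_odd with j; auto| rewrite length_app; cbn [length]; lia].
 - exact ELh.
 - rewrite EYh. intros _. exact HYhY.
 - rewrite EZh. intros y Yy Ny. assert (In y R) as Hy.
   { apply Hcov; auto. intro Hp. apply Ny. apply plus_mono with (X h (2*j)); auto. }
   rewrite ER in Hy. apply in_or_app. apply in_app_or in Hy. destruct Hy as [Hy|[Hy|Hy]]; auto.
   subst y. contradiction.
 - rewrite EZh in H6, H7. exists h', j'. split; [exact H1|]. split; [exact H2|]. split; [exact H3|].
   split; [exact H4|]. split; [exact H5|]. split; [intros z Hz; apply H6; apply HsubZh; exact Hz|].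
   split; [|exact H8].
   destruct H7 as [l1 Hl1]. destruct HsoZh as [[l2 Hl2] _]. exists (l1 ++ l2).
   intros z [Hz1 Hz2]. apply in_or_app. destruct (classic (s1 (h ++ [Yh]) z)) as [Hz|Hz].
   + right. apply Hl2. split; auto.
   + left. apply Hl1. split; auto.
Qed.

Lemma dir2 (A : T -> Prop) : n_strongly_tenable att 1 A -> strongly_tenable att A.
Proof.
 intros [s1 [Hw _]]. unfold strongly_tenable.
 apply inv_wins with (Good := fun d => exists m, length d = 2*m+1 /\
   (0 < m -> finite_set (X d (2*m-1))) /\
   exists h j, is_dispute att (Some 1) h /\ starts_with A h /\ follows s1 h /\ length h = 2*j+1 /\
     X h (2*j) = X d (2*m) /\ (0 < j -> 0 < m /\ subset (X h (2*j-1)) (X d (2*m-1)))).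
 - intros Hcf. exists 0. split; [reflexivity|]. split; [lia|]. exists [A], 0.
   split; [apply disp_single; auto|]. split; [reflexivity|]. split; [intros k Hk Hl; simpl in Hl; lia|].
   split; [reflexivity|]. split; [reflexivity| lia].
 - intros d Y (m & Hl & Hfin & h & j & Hh & Hst & Hf & Hlh & Heq & Hj) HdY.
   destruct (ext1 _ d Y m Hl HdY) as (HcfY & HcfP & Hnc & Hm0 & Hm1).
   assert (HR : exists R, forall x, Y x -> In x R).
   { destruct (Nat.eq_dec m 0) as [E|E].
     - destruct (Hm0 E) as [[l Hl'] _]. exists l; auto.
     - destruct (Hm1 ltac:(lia)) as [_ [[l2 Hl2] _]]. destruct (Hfin ltac:(lia)) as [l1 Hl1].
       exists (l1 ++ l2). intros x Yx. apply in_or_app.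
       destruct (classic (X d (2*m-1) x)); [left; auto|right; apply Hl2; split; auto]. }
   destruct HR as [R HR].
   destruct (feed s1 A Y Hw HcfY (S (length R)) R ltac:(lia) h j Hh Hst Hf Hlh)
     as (h' & j' & H1 & H2 & H3 & H4 & H5 & H6 & H7 & H8).
   + intros Hj0. destruct (Hj Hj0) as [Hm Hs]. intros x Hx. apply Hm1; auto.
   + intros x Yx _. auto.
   + rewrite Heq in H6, H7.
     exists (X h' (2*j')). split.
     * apply build2 with m; auto.
       -- apply disp_cf with (Some 1); auto; lia.
       -- split; [exact H7|exact I].
     * destruct (XYZ d Y (X h' (2*j')) m Hl) as (EZ & EY & _ & EL).
       exists (m+1). rewrite EZ, EY. split; [exact EL|]. split.
       -- intros _. exists R; exact HR.
       -- exists h', j'. split; [exact H1|]. split; [exact H2|]. split; [exact H3|].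
          split; [exact H4|]. split; [reflexivity|]. intros Hj0; split; [lia|auto].
Qed.

End S.

Theorem theorem5 (T : Type) (att : T -> T -> Prop) (A : T -> Prop) :
  strongly_tenable att A <-> n_strongly_tenable att 1 A.
Proof. split; [apply dir1|apply dir2]. Qed.
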